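(* Consider binary node classification with classes $\{0,1\}$, and let $k\in\{0,1\}$. Let $c_0,c_1\in(0,1)$ be the class homophily parameters, and assume the classes are balanced, i.e. $P(\hat{Y}=0)=P(\hat{Y}=1)$, and the graph is homophilic, i.e. $c_k > 1-c_{1-k}$. Then for any node $i$ with neighborhood $\mathcal{N}(i)$ and observed neighbor labels $\{Y_j=y_j\}_{j\in\mathcal{N}(i)}$, $$P\big(\hat{Y}_i = k \mid \{Y_j=y_j\}_{j\in\mathcal{N}(i)}\big) > 0.5$$ if and only if $$|\mathcal{N}_k(i)| > |\mathcal{N}_{1-k}(i)| \cdot \frac{\log c_{1-k} - \log (1 - c_k)}{\log c_k - \log (1 - c_{1-k})}.$$
   Context: Model: each node $i$ has a (latent/soft) class $\hat{Y}_i\in\{0,1\}$, and each neighbor $j\in\mathcal{N}(i)$ has an observed label $Y_j\in\{0,1\}$. Given $\hat{Y}_i$, the neighbor labels are conditionally independent with $P(Y_j=k\mid \hat{Y}_i=k)=c_k$ and $P(Y_j=1-k\mid\hat{Y}_i=k)=1-c_k$ for $k\in\{0,1\}$ ($c_k$ is called the class homophily of class $k$). The posterior is obtained by Bayes' rule: $P(\hat Y_i=k\mid\{Y_j=y_j\}_{j\in\mathcal N(i)})\propto P(\hat Y_i=k)\prod_{j\in\mathcal N(i)}P(Y_j=y_j\mid \hat Y_i=k)$. Notation: $\mathcal{N}_k(i)=\{j\in\mathcal{N}(i): y_j=k\}$ is the set of neighbors of $i$ with label $k$, and $\mathcal{N}_{1-k}(i)=\{j\in\mathcal{N}(i): y_j=1-k\}$.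 *)

(* Defs.v *)
From Stdlib Require Import Reals List.
Import ListNotations.
Open Scope R_scope.

(* Classes are encoded as bool: false = class 0, true = class 1;
   the "other class" 1-k is [negb k]. *)

(* P(Y_j = y | hat Y_i = k) : c_k if y = k, 1 - c_k otherwise. *)
Definition lik (c : bool -> R) (k y : bool) : R :=
  if Bool.eqb y k then c k else 1 - c k.

(* Unnormalized posterior: P(hat Y_i = k) * prod_{j in N(i)} P(Y_j = y_j | hat Y_i = k). *)
Definition joint (prior c : bool -> R) (N : list nat) (y : nat -> bool) (k : bool) : R :=
  prior k * fold_right Rmult 1 (map (fun j => lik c k (y j)) N).

Definition posterior (prior c : bool -> R) (N : list nat) (y : nat -> bool) (k : bool) : R :=
  joint prior c N y k / (joint prior c N y k + joint prior c N y (negb k)).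

Definition nbr_class (N : list nat) (y : nat -> bool) (k : bool) : list nat :=
  filter (fun j => Bool.eqb (y j) k) N.

(* Main.v *)
Require Import Defs.
From Stdlib Require Import Reals List Lra.
Open Scope R_scope.

Lemma prod_eq (c : bool -> R) (m : bool) (N : list nat) (y : nat -> bool) :
  fold_right Rmult 1 (map (fun j => lik c m (y j)) N) =
  c m ^ length (nbr_class N y m) * (1 - c m) ^ length (nbr_class N y (negb m)).
Proof.
  induction N as [|j N IH]; simpl; [ring|].
  unfold nbr_class in *; simpl.
  destruct (y j), m; unfold lik at 1; simpl; rewrite IH; simpl; ring.
Qed.

Theorem mainTheorem1 (c prior : bool -> R) (k : bool) (N : list nat) (y : nat -> bool) :
  0 < c false < 1 -> 0 < c true < 1 ->
  (forall b, 0 <= prior b) -> prior false + prior true = 1 ->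
  prior false = prior true ->
  c k > 1 - c (negb k) ->
  NoDup N ->
  (posterior prior c N y k > 1 / 2 <->
   INR (length (nbr_class N y k)) >
     INR (length (nbr_class N y (negb k))) *
       ((ln (c (negb k)) - ln (1 - c k)) / (ln (c k) - ln (1 - c (negb k))))).
Proof.
  intros H0 H1 _ Hs He Hh _.
  assert (Hp : forall b, prior b = 1/2) by (intros []; lra).
  assert (Hc : forall b, 0 < c b < 1) by (intros []; assumption).
  unfold posterior, joint.
  rewrite !prod_eq, Bool.negb_involutive, !Hp.
  set (a := length (nbr_class N y k)).
  set (b := length (nbr_class N y (negb k))).
  destruct (Hc k) as [ck1 ck2]; destruct (Hc (negb k)) as [cn1 cn2].
  set (A := c k ^ a * (1 - c k) ^ b).
  set (B := c (negb k) ^ b * (1 - c (negb k)) ^ a).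
  assert (HA : 0 < A) by (unfold A; apply Rmult_lt_0_compat; apply pow_lt; lra).
  assert (HB : 0 < B) by (unfold B; apply Rmult_lt_0_compat; apply pow_lt; lra).
  assert (HD : 0 < ln (c k) - ln (1 - c (negb k))).
  { assert (ln (1 - c (negb k)) < ln (c k)) by (apply ln_increasing; lra). lra. }
  assert (E1 : 1/2 * A / (1/2 * A + 1/2 * B) > 1/2 <-> A > B).
  { assert (Hpos : 0 < 1/2*A + 1/2*B) by lra.
    assert (Hf : 1/2 * A / (1/2 * A + 1/2 * B) * (1/2*A + 1/2*B) = 1/2*A) by (field; lra).
    split; intro H.
    - apply Rmult_gt_compat_r with (r := 1/2*A + 1/2*B) in H; [|lra].
      rewrite Hf in H. lra.
    - apply Rlt_gt. apply Rmult_lt_reg_r with (r := 1/2*A + 1/2*B); [lra|].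
      rewrite Hf. lra. }
  rewrite E1.
  assert (LA : ln A = INR a * ln (c k) + INR b * ln (1 - c k)).
  { unfold A. rewrite ln_mult by (apply pow_lt; lra). rewrite !ln_pow by lra. ring. }
  assert (LB : ln B = INR b * ln (c (negb k)) + INR a * ln (1 - c (negb k))).
  { unfold B. rewrite ln_mult by (apply pow_lt; lra). rewrite !ln_pow by lra. ring. }
  set (D := ln (c k) - ln (1 - c (negb k))) in *.
  set (n := ln (c (negb k)) - ln (1 - c k)).
  assert (E2 : A > B <-> INR a * D > INR b * n).
  { split; intro H.
    - assert (ln B < ln A) by (apply ln_increasing; lra).
      unfold D, n; lra.
    - assert (ln B < ln A) by (unfold D, n in H; lra).
      destruct (Rlt_or_le B A) as [|Hle]; [lra|].
      destruct Hle as [Hlt|Heq].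
      + assert (ln A < ln B) by (apply ln_increasing; lra). lra.
      + rewrite Heq in *. lra. }
  rewrite E2.
  assert (E3 : INR b * (n / D) = (INR b * n) / D) by (unfold Rdiv; ring).
  rewrite E3. assert (Hf : INR b * n / D * D = INR b * n) by (field; lra).
  split; intro H.
  - apply Rlt_gt. apply Rmult_lt_reg_r with D; [lra|].
    rewrite Hf. lra.
  - apply Rmult_gt_compat_r with (r := D) in H; [|lra].
    rewrite Hf in H. lra.
Qed.
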